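(* Let $(h_n)_{n\ge1}$ be a sequence taking values in a finite set of maps of the form $h(z)=az+b$ with $a>0$ and $\operatorname{Re}(b)>0$; write $h_n(z)=a_nz+b_n$, and let $H_n=h_1\cdots h_n$. Then $(H_n)$ is of limit-disc type if and only if $\sum_{n=1}^\infty a_1a_2\cdots a_n<+\infty$. Furthermore, if $(H_n)$ is of limit-disc type and converges ideally to a point $q$, then $q\neq\infty$.
   Context: $\mathbb{K}$ is the open right half-plane $\{\operatorname{Re}z>0\}$; each $h_n$ maps $\mathbb{K}$ strictly inside itself. $(H_n)$ is of limit-disc type if $\bigcap_n H_n(\overline{\mathbb{K}})$ (closures in $\overline{\mathbb{C}}$) is a disc (of positive chordal radius), rather than a single point. Möbius maps act on $\mathbb{H}^3=\{(x,y,t):t>0\}$ via Poincaré extension, $j=(0,0,1)$; $(H_n)$ converges ideally to $q\in\overline{\mathbb{C}}$ if $H_n(j)\to q$ in the chordal metric. *)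

(* Defs.v *)
From Stdlib Require Import Reals Lra List.
Open Scope R_scope.

Definition C := (R * R)%type.
Definition Re (z : C) : R := fst z.
Definition Im (z : C) : R := snd z.

(* Extended complex plane C ∪ {∞}: [None] is ∞. *)
Definition Chat := option C.

(* Points of R^3 = C × R, written (z, t); H^3 = {t > 0}. *)
Definition R3 := (C * R)%type.
Definition R3hat := option R3.

Definition sqn3 (x : R3) : R :=
  let '((a, b), t) := x in a * a + b * b + t * t.
Definition sub3 (x y : R3) : R3 :=
  let '((a, b), t) := x in let '((a', b'), t') := y in ((a - a', b - b'), t - t').

Definition chord3 (x y : R3hat) : R :=
  match x, y with
  | Some x, Some y =>
      2 * sqrt (sqn3 (sub3 x y)) / sqrt ((1 + sqn3 x) * (1 + sqn3 y))
  | Some x, None | None, Some x => 2 / sqrt (1 + sqn3 x)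
  | None, None => 0
  end.

(* Ĉ is the plane t = 0 in R^3 ∪ {∞}. *)
Definition embed (w : Chat) : R3hat :=
  match w with Some z => Some (z, 0) | None => None end.

Definition chord (w1 w2 : Chat) : R := chord3 (embed w1) (embed w2).

Definition inK (w : Chat) : Prop :=
  match w with Some z => 0 < Re z | None => False end.
Definition inKbar (w : Chat) : Prop :=
  forall eps, 0 < eps -> exists v, inK v /\ chord w v < eps.

(* An affine map h(z) = a z + b is given by its parameters (a, b), a real. *)
Definition affmap := (R * C)%type.
Definition admissible (p : affmap) : Prop := 0 < fst p /\ 0 < Re (snd p).

Definition act (p : affmap) (w : Chat) : Chat :=
  match w with
  | Some (x, y) => let '(a, (b1, b2)) := p in Some (a * x + b1, a * y + b2)
  | None => None
  end.

(* Poincaré extension of h(z) = a z + b (a > 0) to H^3: (z, t) ↦ (a z + b, a t). *)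
Definition pext (p : affmap) (P : R3) : R3 :=
  let '((x, y), t) := P in let '(a, (b1, b2)) := p in ((a * x + b1, a * y + b2), a * t).

(* H_n = h_1 ∘ ... ∘ h_n  (h indexed from 1; H_0 = id). *)
Fixpoint Hn (h : nat -> affmap) (n : nat) (w : Chat) : Chat :=
  match n with
  | O => w
  | S m => Hn h m (act (h (S m)) w)
  end.

Fixpoint Hn3 (h : nat -> affmap) (n : nat) (P : R3) : R3 :=
  match n with
  | O => P
  | S m => Hn3 h m (pext (h (S m)) P)
  end.

Definition jpt : R3 := ((0, 0), 1).

Definition limit_set (h : nat -> affmap) (w : Chat) : Prop :=
  forall n, (1 <= n)%nat -> exists v, inKbar v /\ Hn h n v = w.

Definition limit_disc_type (h : nat -> affmap) : Prop :=
  exists (c : Chat) (r : R), 0 < r /\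
    forall w, limit_set h w <-> chord w c <= r.

Definition converges_ideally (h : nat -> affmap) (q : Chat) : Prop :=
  forall eps, 0 < eps -> exists N, forall n, (N <= n)%nat ->
    chord3 (Some (Hn3 h n jpt)) (embed q) < eps.

Fixpoint prodA (h : nat -> affmap) (n : nat) : R :=
  match n with
  | O => 1
  | S m => prodA h m * fst (h (S m))
  end.

Fixpoint partial_sum (h : nat -> affmap) (N : nat) : R :=
  match N with
  | O => 0
  | S m => partial_sum h m + prodA h (S m)
  end.

(* Main.v *)
Require Import Defs.
From Stdlib Require Import Reals List Lra Lia Classical.
Open Scope R_scope.

Lemma div_le (a b p : R) : 0 < p -> a <= b * p -> a / p <= b.
Proof. intros Hp H. apply (Rmult_le_reg_r p); auto. unfold Rdiv.
  rewrite Rmult_assoc, Rinv_l by lra. lra. Qed.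

Lemma div_le_inv (a b p : R) : 0 < p -> a / p <= b -> a <= b * p.
Proof. intros Hp H. replace a with (a / p * p) by (field; lra).
  apply Rmult_le_compat_r; lra. Qed.

Lemma key_ineq (Q P D : R) : 0 <= Q -> 0 < P -> 0 < D ->
  (2 * sqrt Q / sqrt (P * D) <= 2 / sqrt D <-> Q <= P).
Proof.
  intros HQ HP HD. rewrite sqrt_mult by lra.
  pose proof (sqrt_lt_R0 _ HP) as Hp. pose proof (sqrt_lt_R0 _ HD) as Hd.
  assert (E : 2 * sqrt Q / (sqrt P * sqrt D) = (2 / sqrt D) * (sqrt Q / sqrt P))
    by (field; lra).
  rewrite E. assert (Hc : 0 < 2 / sqrt D) by (apply Rdiv_lt_0_compat; lra).
  split; intro H.
  - apply sqrt_le_0; try lra.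
    replace (2 / sqrt D) with (2 / sqrt D * 1) in H at 2 by ring.
    apply Rmult_le_reg_l in H; auto.
    apply div_le_inv in H; lra.
  - replace (2 / sqrt D) with (2 / sqrt D * 1) at 2 by ring.
    apply Rmult_le_compat_l; [lra|]. apply div_le; auto.
    rewrite Rmult_1_l. apply sqrt_le_1_alt; auto.
Qed.

Fixpoint Bre (h : nat -> affmap) (n : nat) : R :=
  match n with O => 0 | S k => Bre h k + prodA h k * Re (snd (h (S k))) end.
Fixpoint Bim (h : nat -> affmap) (n : nat) : R :=
  match n with O => 0 | S k => Bim h k + prodA h k * Im (snd (h (S k))) end.
Fixpoint Sa (h : nat -> affmap) (n : nat) : R :=
  match n with O => 0 | S k => Sa h k + prodA h k end.

Lemma Hn_None h n : Hn h n None = None.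
Proof. induction n; simpl; auto. Qed.

Lemma Hn_Some h n : forall x y, Hn h n (Some (x, y)) =
  Some (prodA h n * x + Bre h n, prodA h n * y + Bim h n).
Proof.
  induction n; intros x y; simpl.
  - f_equal; f_equal; ring.
  - destruct (h (S n)) as [a [b1 b2]] eqn:E. simpl. rewrite IHn.
    unfold Re, Im; simpl. f_equal; f_equal; ring.
Qed.

Lemma Hn3_eq h n : forall x y t, Hn3 h n ((x, y), t) =
  ((prodA h n * x + Bre h n, prodA h n * y + Bim h n), prodA h n * t).
Proof.
  induction n; intros x y t; simpl.
  - f_equal; [f_equal|]; ring.
  - destruct (h (S n)) as [a [b1 b2]] eqn:E. simpl. rewrite IHn.
    unfold Re, Im; simpl. f_equal; [f_equal|]; ring.
Qed.

Lemma prodA_pos h (Hpos : forall n, (1 <= n)%nat -> 0 < fst (h n)) n : 0 < prodA h n.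
Proof. induction n; simpl; [lra|]. apply Rmult_lt_0_compat; auto. apply Hpos; lia. Qed.

Lemma Sa_ps h n : Sa h (S n) = 1 + partial_sum h n.
Proof.
  induction n. simpl; ring.
  replace (Sa h (S (S n))) with (Sa h (S n) + prodA h (S n)) by reflexivity.
  rewrite IHn.
  replace (partial_sum h (S n)) with (partial_sum h n + prodA h (S n)) by reflexivity.
  ring.
Qed.

Lemma ps_growing h (Hpos : forall n, (1 <= n)%nat -> 0 < fst (h n)) : Un_growing (partial_sum h).
Proof. intro n. replace (partial_sum h (S n)) with (partial_sum h n + prodA h (S n)) by reflexivity.
  pose proof (prodA_pos h Hpos (S n)). lra. Qed.

Lemma ps_nonneg h (Hpos : forall n, (1 <= n)%nat -> 0 < fst (h n)) n : 0 <= partial_sum h n.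
Proof. induction n; [simpl; lra|]. replace (partial_sum h (S n)) with (partial_sum h n + prodA h (S n)) by reflexivity.
  pose proof (prodA_pos h Hpos (S n)). lra. Qed.

Lemma A_le_ps h (Hpos : forall n, (1 <= n)%nat -> 0 < fst (h n)) n : prodA h n <= 1 + partial_sum h n.
Proof. destruct n. simpl; lra.
  pose proof (ps_nonneg h Hpos n).
  replace (partial_sum h (S n)) with (partial_sum h n + prodA h (S n)) by reflexivity. lra. Qed.

Lemma Sa_le_ps h (Hpos : forall n, (1 <= n)%nat -> 0 < fst (h n)) n : Sa h n <= 1 + partial_sum h n.
Proof. destruct n. simpl; lra. rewrite Sa_ps. pose proof (ps_growing h Hpos n). lra. Qed.

Lemma B_bounds h m M
  (Hpos : forall n, (1 <= n)%nat -> 0 < fst (h n))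
  (Hre : forall n, (1 <= n)%nat -> m <= Re (snd (h n)) <= M)
  (Him : forall n, (1 <= n)%nat -> Rabs (Im (snd (h n))) <= M) n :
  m * Sa h n <= Bre h n <= M * Sa h n /\ Rabs (Bim h n) <= M * Sa h n.
Proof.
  induction n. simpl. rewrite Rabs_R0. lra.
  simpl Bre; simpl Bim; simpl Sa.
  pose proof (prodA_pos h Hpos n) as HA.
  destruct (Hre (S n)) as [H1 H2]; [lia|]. pose proof (Him (S n)) as H3. specialize (H3 ltac:(lia)).
  destruct IHn as [[I1 I2] I3]. split; [split|].
  - pose proof (Rmult_le_compat_l _ _ _ (Rlt_le _ _ HA) H1). lra.
  - pose proof (Rmult_le_compat_l _ _ _ (Rlt_le _ _ HA) H2). lra.
  - eapply Rle_trans. apply Rabs_triang. rewrite Rabs_mult, (Rabs_pos_eq (prodA h n)) by lra.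
    pose proof (Rmult_le_compat_l _ _ _ (Rlt_le _ _ HA) H3). lra.
Qed.

Lemma Bre_growing h m M (Hm : 0 < m)
  (Hpos : forall n, (1 <= n)%nat -> 0 < fst (h n))
  (Hre : forall n, (1 <= n)%nat -> m <= Re (snd (h n)) <= M) : Un_growing (Bre h).
Proof. intro n. simpl Bre at 2. pose proof (prodA_pos h Hpos n) as HA.
  destruct (Hre (S n)) as [H1 H2]; [lia|].
  pose proof (Rmult_le_compat_l _ _ _ (Rlt_le _ _ HA) H1). nra. Qed.

Lemma inKbar_None : inKbar None.
Proof.
  intros eps He. exists (Some (2 / eps, 0)). split. simpl. unfold Re; simpl.
  apply Rdiv_lt_0_compat; lra.
  unfold chord, chord3; simpl.
  set (R0 := 2/eps). assert (HR : 0 < R0) by (apply Rdiv_lt_0_compat; lra).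
  set (S := sqrt (1 + (R0 * R0 + 0 * 0 + 0 * 0))).
  assert (Hs : R0 < S).
  { unfold S. rewrite <- (sqrt_square R0) at 1 by lra. apply sqrt_lt_1_alt. nra. }
  apply (Rmult_lt_reg_r S). lra.
  unfold Rdiv. rewrite Rmult_assoc, Rinv_l by lra.
  assert (eps * R0 = 2) by (unfold R0; field; lra).
  nra.
Qed.

Lemma chord_upper a P : 0 <= a -> 1 <= P -> 2 * sqrt a / sqrt P <= 2 * sqrt a.
Proof. intros Ha HP. pose proof (sqrt_pos a).
  assert (1 <= sqrt P) by (rewrite <- sqrt_1; apply sqrt_le_1_alt; lra).
  apply div_le. lra. nra. Qed.

Lemma chord_lower Q k P Dv : 0 <= Q -> 0 < k -> 0 < P -> 0 < Dv -> k * Dv <= Q ->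
  2 * sqrt k / sqrt P <= 2 * sqrt Q / sqrt (P * Dv).
Proof.
  intros HQ Hk HP HD H. rewrite sqrt_mult by lra.
  pose proof (sqrt_lt_R0 _ HP). pose proof (sqrt_lt_R0 _ HD).
  assert (sqrt k * sqrt Dv <= sqrt Q) by (rewrite <- sqrt_mult by lra; apply sqrt_le_1_alt; lra).
  replace (2 * sqrt k / sqrt P) with (2 * (sqrt k * sqrt Dv) / (sqrt P * sqrt Dv)) by (field; lra).
  unfold Rdiv. apply Rmult_le_compat_r.
  left; apply Rinv_0_lt_compat; nra. lra.
Qed.

Lemma sqn_sub x y u w : sqn3 (sub3 ((x, y), 0) ((u, w), 0)) = (x - u) * (x - u) + (y - w) * (y - w) + (0 - 0) * (0 - 0).
Proof. reflexivity. Qed.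
Lemma sqn_pt x y : sqn3 ((x, y), 0) = x * x + y * y + 0 * 0.
Proof. reflexivity. Qed.

Lemma chord_SS x y u w : chord (Some (x, y)) (Some (u, w)) =
  2 * sqrt ((x - u) * (x - u) + (y - w) * (y - w) + (0 - 0) * (0 - 0)) /
  sqrt ((1 + (x * x + y * y + 0 * 0)) * (1 + (u * u + w * w + 0 * 0))).
Proof. reflexivity. Qed.

Lemma inKbar_Some x y : inKbar (Some (x, y)) <-> 0 <= x.
Proof.
  split; intro H.
  - destruct (Rle_or_lt 0 x) as [|Hx]; auto. exfalso.
    set (d := - x). set (k := d * d / (2 * (1 + 2 * y * y + d * d))).
    assert (Hd : 0 < d) by (unfold d; lra).
    assert (Hk2 : k * (2 * (1 + 2 * y * y + d * d)) = d * d) by (unfold k; field; nra).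
    assert (Hk : 0 < k) by (unfold k; apply Rdiv_lt_0_compat; nra).
    set (P := 1 + (x * x + y * y + 0 * 0)).
    assert (HP : 0 < P) by (unfold P; nra).
    assert (He : 0 < 2 * sqrt k / sqrt P) by
      (apply Rdiv_lt_0_compat; [pose proof (sqrt_lt_R0 _ Hk); lra | apply sqrt_lt_R0; auto]).
    destruct (H _ He) as [v [Hv Hc]]. destruct v as [[u w]|]; [|contradiction].
    simpl in Hv. unfold Re in Hv; simpl in Hv.
    rewrite chord_SS in Hc. fold P in Hc.
    assert (2 * sqrt k / sqrt P <= 2 * sqrt ((x - u) * (x - u) + (y - w) * (y - w) + (0 - 0) * (0 - 0)) /
      sqrt (P * (1 + (u * u + w * w + 0 * 0)))); [|lra].
    apply chord_lower; [pose proof (Rle_0_sqr (x-u)); pose proof (Rle_0_sqr (y-w)); unfold Rsqr in *; lra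
      | lra | lra | pose proof (Rle_0_sqr u); pose proof (Rle_0_sqr w); unfold Rsqr in *; lra |].
    assert (Ex : x = - d) by (unfold d; ring). rewrite Ex.
    assert (H2k : 2 * k <= 1) by nra.
    assert (Hky : k * (1 + 2 * y * y) <= d * d) by nra.
    assert (k * (w * w) <= k * (2 * ((w - y) * (w - y)) + 2 * (y * y))).
    { apply Rmult_le_compat_l. lra. pose proof (Rle_0_sqr (w - 2 * y)). unfold Rsqr in *. nra. }
    assert (0 <= (1 - k) * (u * u)) by (apply Rmult_le_pos; [lra | apply Rle_0_sqr]).
    assert (0 <= (1 - 2 * k) * ((w - y) * (w - y))) by (apply Rmult_le_pos; [lra | apply Rle_0_sqr]).
    assert (0 <= u * d) by (apply Rmult_le_pos; lra).
    clear Hc He.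
    nra.
  - intros eps He. set (e := eps / 4). exists (Some (x + e, y)). split.
    simpl; unfold Re; simpl; unfold e; lra.
    rewrite chord_SS.
    assert (1 <= 1 + (x * x + y * y + 0 * 0)) by (pose proof (Rle_0_sqr x); pose proof (Rle_0_sqr y); unfold Rsqr in *; lra).
    assert (1 <= 1 + ((x + e) * (x + e) + y * y + 0 * 0)) by (pose proof (Rle_0_sqr (x+e)); pose proof (Rle_0_sqr y); unfold Rsqr in *; lra).
    eapply Rle_lt_trans; [apply chord_upper; [pose proof (Rle_0_sqr (x-(x+e))); pose proof (Rle_0_sqr (y-y)); unfold Rsqr in *; lra| nra]|].
    match goal with |- 2 * sqrt ?q < _ => replace q with (e * e) by ring end.
    rewrite sqrt_square by (unfold e; lra). unfold e; lra.
Qed.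

Lemma far_None eps : 0 < eps -> chord None (Some (2 / eps, 0)) < eps.
Proof.
  intros He. unfold chord, chord3; simpl.
  set (R0 := 2/eps). assert (HR : 0 < R0) by (apply Rdiv_lt_0_compat; lra).
  set (S := sqrt (1 + (R0 * R0 + 0 * 0 + 0 * 0))).
  assert (Hs : R0 < S).
  { unfold S. rewrite <- (sqrt_square R0) at 1 by lra. apply sqrt_lt_1_alt. nra. }
  apply (Rmult_lt_reg_r S). lra.
  unfold Rdiv. rewrite Rmult_assoc, Rinv_l by lra.
  assert (eps * R0 = 2) by (unfold R0; field; lra). nra.
Qed.

Lemma limit_set_Some_le h (Hpos : forall n, (1 <= n)%nat -> 0 < fst (h n)) x y :
  limit_set h (Some (x, y)) -> forall n, (1 <= n)%nat -> Bre h n <= x.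
Proof.
  intros H n Hn. destruct (H n Hn) as [v [Hv E]].
  destruct v as [[p q]|]. 2: rewrite Hn_None in E; discriminate.
  apply inKbar_Some in Hv. rewrite Hn_Some in E. injection E as E1 E2.
  pose proof (prodA_pos h Hpos n). nra.
Qed.

Lemma limit_set_char h s (Hpos : forall n, (1 <= n)%nat -> 0 < fst (h n))
  (Hg : Un_growing (Bre h)) (Hcv : Un_cv (Bre h) s) w :
  limit_set h w <-> (w = None \/ exists x y, w = Some (x, y) /\ s <= x).
Proof.
  split.
  - intro H. destruct w as [[x y]|]; [|left; auto]. right. exists x, y. split; auto.
    destruct (Rle_or_lt s x) as [|Hx]; auto. exfalso.
    destruct (Hcv (s - x)) as [N HN]. lra.
    specialize (HN (S N) ltac:(lia)). unfold R_dist in HN. apply Rabs_def2 in HN.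
    pose proof (limit_set_Some_le h Hpos x y H (S N) ltac:(lia)). lra.
  - intros [->|[x [y [-> Hx]]]] n Hn.
    + exists None. split. apply inKbar_None. apply Hn_None.
    + pose proof (prodA_pos h Hpos n) as HA. pose proof (growing_ineq _ _ Hg Hcv n).
      exists (Some ((x - Bre h n) / prodA h n, (y - Bim h n) / prodA h n)). split.
      * apply inKbar_Some. unfold Rdiv. apply Rmult_le_pos. lra. left; apply Rinv_0_lt_compat; lra.
      * rewrite Hn_Some. f_equal. f_equal; field; lra.
Qed.

Lemma disc_char s w : let c0 := s + sqrt (s * s + 1) in
  chord w (Some (c0, 0)) <= 2 / sqrt (1 + (c0 * c0 + 0 * 0 + 0 * 0)) <->
  (w = None \/ exists x y, w = Some (x, y) /\ s <= x).
Proof.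
  intro c0. set (t := sqrt (s * s + 1)) in c0.
  assert (Ht : t * t = s * s + 1) by (unfold t; apply sqrt_sqrt; nra).
  assert (Ht0 : 0 <= t) by apply sqrt_pos.
  assert (Hc : 0 < c0) by (unfold c0; nra).
  assert (Hcc : c0 * c0 - 1 = 2 * s * c0) by (unfold c0; nra).
  destruct w as [[x y]|].
  - rewrite chord_SS. rewrite key_ineq.
    + split.
      * intro H. right. exists x, y. split; auto. nra.
      * intros [H|[x' [y' [E H]]]]; [discriminate|]. injection E as -> ->. nra.
    + pose proof (Rle_0_sqr (x-c0)); pose proof (Rle_0_sqr (y-0)); unfold Rsqr in *; lra.
    + pose proof (Rle_0_sqr x); pose proof (Rle_0_sqr y); unfold Rsqr in *; lra.
    + pose proof (Rle_0_sqr c0); unfold Rsqr in *; lra.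
  - split; intro; [left; auto|]. unfold chord, chord3, embed. right; reflexivity.
Qed.

Lemma sqn3_nonneg P : 0 <= sqn3 P.
Proof. destruct P as [[a b] t]. simpl. pose proof (Rle_0_sqr a); pose proof (Rle_0_sqr b); pose proof (Rle_0_sqr t); unfold Rsqr in *; lra. Qed.

Lemma list_bounds (l : list affmap) : (forall p, In p l -> admissible p) ->
  exists m M, 0 < m /\ forall p, In p l -> (m <= Re (snd p) <= M) /\ Rabs (Im (snd p)) <= M.
Proof.
  induction l as [|a l IH]; intro H.
  - exists 1, 0. split. lra. intros p [].
  - destruct IH as [m [M [Hm HM]]]. intros p Hp; apply H; right; auto.
    destruct (H a (or_introl eq_refl)) as [_ Ha].
    exists (Rmin m (Re (snd a))), (Rmax M (Rmax (Re (snd a)) (Rabs (Im (snd a))))).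
    split. apply Rmin_glb_lt; lra.
    intros p [->|Hp].
    + pose proof (Rmin_r m (Re (snd p))). pose proof (Rmax_r M (Rmax (Re (snd p)) (Rabs (Im (snd p))))).
      pose proof (Rmax_l (Re (snd p)) (Rabs (Im (snd p)))). pose proof (Rmax_r (Re (snd p)) (Rabs (Im (snd p)))).
      lra.
    + destruct (HM p Hp) as [[H1 H2] H3].
      pose proof (Rmin_l m (Re (snd a))). pose proof (Rmax_l M (Rmax (Re (snd a)) (Rabs (Im (snd a))))).
      lra.
Qed.

Lemma sq_le a K : Rabs a <= K -> a * a <= K * K.
Proof. intro H. pose proof (Rabs_pos a).
  assert (a * a = Rabs a * Rabs a) by (rewrite <- Rabs_mult; rewrite Rabs_pos_eq; nra). nra. Qed.

Theorem lemma3p1 (maps : list affmap) (h : nat -> affmap)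
  (Hmaps : forall p, In p maps -> admissible p)
  (Hh : forall n, (1 <= n)%nat -> In (h n) maps) :
  (limit_disc_type h <-> exists l, Un_cv (partial_sum h) l) /\
  (limit_disc_type h -> forall q : Chat, converges_ideally h q -> q <> None).
Proof.
  destruct (list_bounds maps Hmaps) as [m [M [Hm HM]]].
  assert (Hpos : forall n, (1 <= n)%nat -> 0 < fst (h n)) by (intros n Hn; apply (Hmaps _ (Hh n Hn))).
  assert (Hre : forall n, (1 <= n)%nat -> m <= Re (snd (h n)) <= M) by (intros n Hn; apply (HM _ (Hh n Hn))).
  assert (Him : forall n, (1 <= n)%nat -> Rabs (Im (snd (h n))) <= M) by (intros n Hn; apply (HM _ (Hh n Hn))).
  assert (HM0 : 0 <= M) by (destruct (Hre 1%nat) as [? ?]; [lia|lra]).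
  assert (Hbd := B_bounds h m M Hpos Hre Him).
  assert (Hpsg := ps_growing h Hpos).
  assert (Hiff : limit_disc_type h <-> exists l, Un_cv (partial_sum h) l).
  { split.
    - intros [c [r [Hr Hc]]].
      destruct (classic (has_ub (partial_sum h))) as [Hub|Hnub].
      + destruct (growing_cv _ Hpsg Hub) as [l Hl]. exists l; auto.
      + exfalso.
        assert (Hunb : forall K, exists n, K < partial_sum h n).
        { intro K. apply NNPP; intro Hn. apply Hnub. exists K. intros x [i ->].
          apply Rnot_lt_le; intro; apply Hn; exists i; auto. }
        assert (Hno : forall x y, ~ limit_set h (Some (x, y))).
        { intros x y Hl. destruct (Hunb (x / m)) as [n Hn].
          pose proof (limit_set_Some_le h Hpos x y Hl (S n) ltac:(lia)).
          destruct (Hbd (S n)) as [[B1 B2] _]. rewrite Sa_ps in B1.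
          assert (m * (x / m) = x) by (field; lra).
          assert (m * (x / m) < m * partial_sum h n) by (apply Rmult_lt_compat_l; lra).
          nra. }
        destruct c as [[a b]|].
        * apply (Hno a b). apply Hc. rewrite chord_SS.
          match goal with |- 2 * sqrt ?q / _ <= _ => replace q with 0 by ring end.
          rewrite sqrt_0. unfold Rdiv. rewrite Rmult_0_r, Rmult_0_l. lra.
        * apply (Hno (2 / r) 0). apply Hc. left.
          pose proof (far_None r Hr). unfold chord, chord3, embed in *. exact H.
    - intros [l Hl].
      assert (Hps : forall n, partial_sum h n <= l) by (apply growing_ineq; auto).
      assert (HBg := Bre_growing h m M Hm Hpos Hre).
      assert (Hub : has_ub (Bre h)).
      { exists (M * (1 + l)). intros x [i ->].
        destruct (Hbd i) as [[_ B2] _]. pose proof (Sa_le_ps h Hpos i).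
        pose proof (Hps i). pose proof (Rmult_le_compat_l M (Sa h i) (1 + l) HM0 ltac:(lra)). lra. }
      destruct (growing_cv _ HBg Hub) as [s Hs].
      set (c0 := s + sqrt (s * s + 1)).
      exists (Some (c0, 0)), (2 / sqrt (1 + (c0 * c0 + 0 * 0 + 0 * 0))). split.
      + apply Rdiv_lt_0_compat. lra. apply sqrt_lt_R0.
        pose proof (Rle_0_sqr c0); unfold Rsqr in *; lra.
      + intro w. rewrite (limit_set_char h s Hpos HBg Hs w). pose proof (disc_char s w) as D. cbv zeta in D. fold c0 in D. tauto. }
  split; auto.
  intros Hd q Hq Eq. subst q.
  destruct (proj1 Hiff Hd) as [l Hl].
  assert (Hps : forall n, partial_sum h n <= l) by (apply growing_ineq; auto).
  set (K := M * (1 + l) + 1 + l).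
  assert (Hl0 : 0 <= l) by (pose proof (Hps 0%nat); simpl in *; lra).
  assert (HK : forall n, sqn3 (Hn3 h n jpt) <= 3 * (K * K)).
  { intro n. unfold jpt. rewrite Hn3_eq.
    change (sqn3 ((prodA h n * 0 + Bre h n, prodA h n * 0 + Bim h n), prodA h n * 1))
      with ((prodA h n * 0 + Bre h n) * (prodA h n * 0 + Bre h n) + (prodA h n * 0 + Bim h n) * (prodA h n * 0 + Bim h n)
            + (prodA h n * 1) * (prodA h n * 1)).
    pose proof (prodA_pos h Hpos n). pose proof (A_le_ps h Hpos n). pose proof (Hps n).
    destruct (Hbd n) as [[B1 B2] B3]. pose proof (Sa_le_ps h Hpos n).
    assert (0 <= Sa h n) by (destruct n; [simpl; lra| rewrite Sa_ps; pose proof (ps_nonneg h Hpos n); lra]).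
    pose proof (Rmult_le_compat_l M (Sa h n) (1 + l) HM0 ltac:(lra)).
    pose proof (Rmult_le_pos m (Sa h n) ltac:(lra) ltac:(lra)).
    assert (E1 : (prodA h n * 0 + Bre h n) * (prodA h n * 0 + Bre h n) <= K * K).
    { apply sq_le. replace (prodA h n * 0 + Bre h n) with (Bre h n) by ring.
      rewrite Rabs_pos_eq by lra. unfold K. lra. }
    assert (E2 : (prodA h n * 0 + Bim h n) * (prodA h n * 0 + Bim h n) <= K * K).
    { apply sq_le. replace (prodA h n * 0 + Bim h n) with (Bim h n) by ring. unfold K. lra. }
    assert (E3 : (prodA h n * 1) * (prodA h n * 1) <= K * K).
    { apply sq_le. rewrite Rabs_pos_eq by lra. pose proof (Rmult_le_pos M (1 + l) HM0 ltac:(lra)). unfold K. lra. }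
    lra. }
  set (e0 := 2 / sqrt (1 + 3 * (K * K))).
  assert (HKK : 0 <= K * K) by (pose proof (Rle_0_sqr K); unfold Rsqr in *; lra).
  assert (He0 : 0 < e0) by (apply Rdiv_lt_0_compat; [lra| apply sqrt_lt_R0; lra]).
  destruct (Hq e0 He0) as [N HN]. specialize (HN N (Nat.le_refl N)).
  change (chord3 (Some (Hn3 h N jpt)) (embed None)) with (2 / sqrt (1 + sqn3 (Hn3 h N jpt))) in HN.
  assert (e0 <= 2 / sqrt (1 + sqn3 (Hn3 h N jpt))); [|lra].
  unfold e0, Rdiv. apply Rmult_le_compat_l. lra. apply Rinv_le_contravar.
  apply sqrt_lt_R0. pose proof (sqn3_nonneg (Hn3 h N jpt)). lra.
  apply sqrt_le_1_alt. pose proof (HK N). lra.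
Qed.
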